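(* Let $n,k$ be positive integers with $k\le\frac14 n$. Then every $k$-homogeneous partial latin square of order $n$ is contained in a $(k+1)$-homogeneous partial latin square of order $n$ (that is, some of its blank cells can be filled to obtain a $(k+1)$-homogeneous partial latin square).
   Context: A $k$-homogeneous partial latin square of order $n$ is an $n\times n$ array in which each cell is either blank or contains one of the symbols $\{1,2,\dots,n\}$, such that (i) no symbol occurs twice in any row or any column, (ii) each symbol occurs exactly $k$ times in the array, and (iii) each row and each column contains exactly $k$ filled cells. *)

(* Defs.v *)
From mathcomp Require Import all_boot.
Set Implicit Arguments. Unset Strict Implicit. Unset Printing Implicit Defensive.

(* A partial array of order n: cell (r,c) is blank (None) or holds Some s,
   with symbols {1,..,n} represented by 'I_n. *)
Definition parray (n : nat) := ('I_n -> 'I_n -> option 'I_n).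

Definition latin_prop n (L : parray n) : Prop :=
  (forall r c1 c2 s, L r c1 = Some s -> L r c2 = Some s -> c1 = c2) /\
  (forall c r1 r2 s, L r1 c = Some s -> L r2 c = Some s -> r1 = r2).

Definition homogeneous_pls n k (L : parray n) : Prop :=
  [/\ latin_prop L,
      (forall s : 'I_n, #|[set rc : 'I_n * 'I_n | L rc.1 rc.2 == Some s]| = k),
      (forall r : 'I_n, #|[set c : 'I_n | L r c != None]| = k) &
      (forall c : 'I_n, #|[set r : 'I_n | L r c != None]| = k)].

Definition pls_contained n (L M : parray n) : Prop :=
  forall r c s, L r c = Some s -> M r c = Some s.

(* Main.v *)
Require Import Defs.
From mathcomp Require Import all_boot.
From Stdlib Require Import Lia.
Set Implicit Arguments. Unset Strict Implicit. Unset Printing Implicit Defensive.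

Section Match.
Variables (n : nat) (e : 'I_n -> 'I_n -> bool).

Definition valid (A : {set 'I_n}) (g : 'I_n -> 'I_n) :=
  {in A &, injective g} /\ {in A, forall x, e x (g x)}.

Lemma valid_ext A g r c : valid A g -> r \notin A -> c \notin g @: A -> e r c ->
  valid (r |: A) (fun x => if x == r then c else g x).
Proof.
move=> [gi ge] rA cA erc; split.
  move=> x y; rewrite !in_setU1 => /orP[/eqP->|xA] /orP[/eqP->|yA] //=;
    rewrite ?eqxx.
  - case: eqP => [->//|_ E]; case/negP: cA; rewrite E; exact: imset_f.
  - case: eqP => [xr|_]; first by move: rA; rewrite -xr xA.
    move=> E; case/negP: cA; rewrite -E; exact: imset_f.
  - case: eqP => [xr|_]; first by move: rA; rewrite -xr xA.
    case: eqP => [yr|_]; first by move: rA; rewrite -yr yA.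
    exact: gi.
move=> x; rewrite in_setU1 => /orP[/eqP->|xA]; first by rewrite eqxx.
case: eqP => [xr|_]; first by move: rA; rewrite -xr xA.
exact: ge.
Qed.

Lemma valid_repl A g x c : valid A g -> x \in A -> c \notin g @: A -> e x c ->
  valid A (fun y => if y == x then c else g y).
Proof.
move=> [gi ge] xA cA exc; split.
  move=> y z yA zA /=.
  case: eqP => [->|yx]; case: eqP => [->|zx] //.
  - move=> E; case/negP: cA; rewrite E; exact: imset_f.
  - move=> E; case/negP: cA; rewrite -E; exact: imset_f.
  - exact: gi.
move=> y yA /=; case: eqP => [->//|_]; exact: ge.
Qed.

Hypothesis ore : forall r c, n <= #|[set c' | e r c']| + #|[set r' | e r' c]|.

Lemma match_step m : m <= n -> exists (A : {set 'I_n}) (g : 'I_n -> 'I_n), #|A| = m /\ valid A g.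
Proof.
elim: m => [|m IH] lemn.
  exists set0, id; split; first by rewrite cards0.
  by split=> x; rewrite in_set0.
have [A [g [cA [gi ge]]]] := IH (ltnW lemn).
have [r rA] : exists r, r \notin A.
  case: (pickP (fun r => r \notin A)) => [r rA|allA]; first by exists r.
  have : [set: 'I_n] \subset A by apply/subsetP=> x _; move: (allA x) => /= /negbFE.
  by move/subset_leq_card; rewrite cardsT card_ord cA leqNgt lemn.
have cim : #|g @: A| = m by rewrite card_in_imset.
have [c cA'] : exists c, c \notin g @: A.
  case: (pickP (fun c => c \notin g @: A)) => [c cc|allA]; first by exists c.
  have : [set: 'I_n] \subset g @: A.
    by apply/subsetP=> x _; move: (allA x) => /= /negbFE.
  by move/subset_leq_card; rewrite cardsT card_ord cim leqNgt lemn.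
have cS : forall r', r' \notin A -> #|r' |: A| = m.+1.
  by move=> r' r'A; rewrite cardsU1 r'A cA.
case: (pickP (fun c' => (c' \notin g @: A) && e r c')) => [c' /andP[c'A erc']|H1].
  exists (r |: A), (fun x => if x == r then c' else g x); split; first exact: cS.
  exact: valid_ext.
case: (pickP (fun r' => (r' \notin A) && e r' c)) => [r' /andP[r'A erc]|H2].
  exists (r' |: A), (fun x => if x == r' then c else g x); split; first exact: cS.
  exact: valid_ext.
set P := [set x in A | e r (g x)].
set Q := [set x in A | e x c].
have cP : #|P| = #|[set c' | e r c']|.
  rewrite -(@card_in_imset _ _ g P); last first.
    by move=> x y; rewrite !inE => /andP[xA _] /andP[yA _]; exact: gi.
  suff -> : g @: P = [set c' | e r c'] by [].
  apply/setP=> y; rewrite inE; apply/imsetP/idP.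
    by case=> x; rewrite inE => /andP[_ ?] ->.
  move=> ery; have := H1 y; rewrite /= ery andbT => /negbFE /imsetP [x xA E]; subst y.
  by exists x => //; rewrite inE xA ery.
have cQ : #|Q| = #|[set r' | e r' c]|.
  apply: eq_card => y; rewrite !inE; case eyc: (e y c); last by rewrite andbF.
  by have := H2 y; rewrite /= eyc andbT => /negbFE ->.
have sPQ : P :|: Q \subset A by apply/subsetP=> y; rewrite !inE => /orP[]/andP[].
have : 0 < #|P :&: Q|.
  have := cardsUI P Q; rewrite cP cQ => E.
  have := ore r c; rewrite -E => H.
  have := subset_leq_card sPQ; rewrite cA => H'.
  rewrite lt0n; apply/negP => /eqP Z; move: H; rewrite Z addn0.
  by move=> H; have := leq_trans H H'; rewrite leqNgt lemn.
case/card_gt0P => x; rewrite !inE => /andP[/andP[xA ergx] /andP[_ exc]].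
have V1 := valid_repl (conj gi ge) xA cA' exc.
set g1 := (fun y => if y == x then c else g y) in V1.
exists (r |: A), (fun y => if y == r then g x else g1 y); split; first exact: cS.
apply: valid_ext => //.
apply/imsetP => [[y yA]]; rewrite /g1; case: eqP => [_ E|yx E].
  by case/negP: cA'; rewrite -E; exact: imset_f.
by apply: yx; apply: gi.
Qed.

Lemma match_ore : exists f : 'I_n -> 'I_n, injective f /\ forall r, e r (f r).
Proof.
have [A [g [cA [gi ge]]]] := match_step (leqnn n).
have AT : A = setT by apply/eqP; rewrite eqEcard subsetT /= cardsT card_ord cA.
exists g; split; first by move=> x y; apply: gi; rewrite AT inE.
by move=> r; apply: ge; rewrite AT inE.
Qed.
End Match.

Section Main.
Variables (n k : nat) (L : parray n).
Hypothesis HL : homogeneous_pls k L.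

Lemma rowsym r : #|[set s | [exists c, L r c == Some s]]| <= k.
Proof.
case: HL => _ _ Hr _.
rewrite -(Hr r); apply: leq_trans (leq_imset_card (fun c => odflt r (L r c)) _).
apply: subset_leq_card; apply/subsetP => s; rewrite inE => /existsP [c /eqP E].
by apply/imsetP; exists c; rewrite ?inE E.
Qed.

Lemma colsym c : #|[set s | [exists r, L r c == Some s]]| <= k.
Proof.
case: HL => _ _ _ Hc.
rewrite -(Hc c); apply: leq_trans (leq_imset_card (fun r => odflt c (L r c)) _).
apply: subset_leq_card; apply/subsetP => s; rewrite inE => /existsP [r /eqP E].
by apply/imsetP; exists r; rewrite ?inE E.
Qed.

Lemma symrows s : #|[set r | [exists c, L r c == Some s]]| <= k.
Proof.
case: HL => _ Hs _ _.
rewrite -(Hs s); apply: leq_trans (leq_imset_card fst _).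
apply: subset_leq_card; apply/subsetP => r; rewrite inE => /existsP [c E].
by apply/imsetP; exists (r, c); rewrite ?inE.
Qed.

Lemma symcols s : #|[set c | [exists r, L r c == Some s]]| <= k.
Proof.
case: HL => _ Hs _ _.
rewrite -(Hs s); apply: leq_trans (leq_imset_card snd _).
apply: subset_leq_card; apply/subsetP => c; rewrite inE => /existsP [r E].
by apply/imsetP; exists (r, c); rewrite ?inE.
Qed.

End Main.

Lemma card_lb n (X B C : {set 'I_n}) : ~: X \subset B :|: C -> n - (#|B| + #|C|) <= #|X|.
Proof.
move=> sub; rewrite [#|X|]cardsCs card_ord leq_sub2l //.
apply: leq_trans (subset_leq_card sub) _; exact: leq_card_setU.
Qed.

Theorem theorem5p7 (n k : nat) (L : parray n) :
  0 < n -> 0 < k -> 4 * k <= n ->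
  homogeneous_pls k L ->
  exists M : parray n, homogeneous_pls k.+1 M /\ pls_contained L M.
Proof.
move=> n0 k0 nk HL.
have HL' := HL; case: HL' => [[lr lc] Hs Hr Hc].
have n2k : k + k <= n - k by apply/leP; move/leP: nk; rewrite -?plusE -?minusE -?multE; lia.
have [sig [sigi sige]] : exists sig : 'I_n -> 'I_n, injective sig /\ forall r, L r (sig r) == None.
  apply: (@match_ore n (fun r c => L r c == None)) => r c.
  have e1 : #|[set c' | L r c' == None]| = n - k.
    rewrite cardsCs card_ord -(Hr r); congr (_ - _); apply: eq_card => x.
    by rewrite !inE.
  have e2 : #|[set r' | L r' c == None]| = n - k.
    rewrite cardsCs card_ord -(Hc c); congr (_ - _); apply: eq_card => x.
    by rewrite !inE.
  rewrite e1 e2; apply/leP; move/leP: nk; rewrite -?plusE -?minusE -?multE; lia.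
pose rowS r := [set s | [exists c, L r c == Some s]].
pose colS c := [set s | [exists r, L r c == Some s]].
have [tau [taui taue]] : exists tau : 'I_n -> 'I_n, injective tau /\
    forall r, (tau r \notin rowS r) && (tau r \notin colS (sig r)).
  apply: (@match_ore n (fun r s => (s \notin rowS r) && (s \notin colS (sig r)))) => r s.
  have h1 := card_lb (X := [set s' | (s' \notin rowS r) && (s' \notin colS (sig r))])
     (B := rowS r) (C := colS (sig r)).
  have h2 := card_lb (X := [set r' | (s \notin rowS r') && (s \notin colS (sig r'))])
     (B := [set r' | [exists c, L r' c == Some s]])
     (C := [set r' | s \in colS (sig r')]).
  have b1 : #|rowS r| <= k by apply: rowsym.
  have b2 : #|colS (sig r)| <= k by apply: colsym.
  have b3 : #|[set r' | [exists c, L r' c == Some s]]| <= k by apply: symrows.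
  have b4 : #|[set r' | s \in colS (sig r')]| <= k.
    rewrite -(card_imset _ sigi); apply: leq_trans (symcols HL s).
    apply: subset_leq_card; apply/subsetP => c /imsetP [r' ]; rewrite !inE => H ->.
    exact: H.
  have : n - (#|rowS r| + #|colS (sig r)|) <=
     #|[set s' | (s' \notin rowS r) && (s' \notin colS (sig r))]|.
    apply: h1; apply/subsetP => x; rewrite !inE negb_and !negbK.
    by case/orP=> H; rewrite H ?orbT.
  have : n - (#|[set r' | [exists c, L r' c == Some s]]| + #|[set r' | s \in colS (sig r')]|) <=
     #|[set r' | (s \notin rowS r') && (s \notin colS (sig r'))]|.
    apply: h2; apply/subsetP => x; rewrite !inE negb_and !negbK.
    case/orP=> H; first by rewrite H.
    by rewrite H orbT.
  move: b1 b2 b3 b4 nk => /leP b1 /leP b2 /leP b3 /leP b4 /leP nk0 /leP a1 /leP a2.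
  apply/leP; rewrite -?plusE -?minusE -?multE in b1 b2 b3 b4 nk0 a1 a2 *; set X := #|[set s' | _ & _]| in a2 *; set Y := #|[set r' | _ & _]| in a1 *; clearbody X Y; lia.
have sN r : L r (sig r) = None by apply/eqP.
have tR r c : L r c <> Some (tau r).
  move=> E; have /andP[H _] := taue r; case/negP: H; rewrite inE.
  by apply/existsP; exists c; rewrite E.
have tC r r' : L r' (sig r) <> Some (tau r).
  move=> E; have /andP[_ H] := taue r; case/negP: H; rewrite inE.
  by apply/existsP; exists r'; rewrite E.
pose M : parray n := fun r c =>
  if L r c is Some s then Some s else if c == sig r then Some (tau r) else None.
exists M; split; last by move=> r c s; rewrite /M => ->.
split.
- split.
  + move=> r c1 c2 s; rewrite /M.
    case E1: (L r c1) => [s1|]; case E2: (L r c2) => [s2|].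
    * by move=> [<-] [e2]; apply: (lr r c1 c2 s1); rewrite ?E1 ?E2 ?e2.
    * case: eqP => // _ [e1] [e2]; subst; by case: (tR _ _ E1).
    * case: eqP => // _ [e1] [e2]; subst; by case: (tR _ _ E2).
    * by do 2 case: eqP => // ->.
  + move=> c r1 r2 s; rewrite /M.
    case E1: (L r1 c) => [s1|]; case E2: (L r2 c) => [s2|].
    * by move=> [<-] [e2]; apply: (lc c r1 r2 s1); rewrite ?E1 ?E2 ?e2.
    * case: eqP => // ec [e1] [e2]; subst; by case: (tC _ _ E1).
    * case: eqP => // ec [e1] [e2]; subst; by case: (tC _ _ E2).
    * by case: eqP => // -> _; case: eqP => // /sigi.
- move=> s; set r0 := invF taui s.
  have -> : [set rc : 'I_n * 'I_n | M rc.1 rc.2 == Some s] =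
            (r0, sig r0) |: [set rc : 'I_n * 'I_n | L rc.1 rc.2 == Some s].
    apply/setP => [[r c]]; rewrite !inE /M /= xpair_eqE.
    case E: (L r c) => [s'|].
      case: (r =P r0) => [er|]; last by rewrite /=.
      case: (c =P sig r0) => [ec|]; last by rewrite /=.
      by rewrite er ec sN in E.
    rewrite orbF; case: (c =P sig r) => [->|nc].
      have -> : (Some (tau r) == Some s) = (tau r == s) by apply/eqP/eqP => [[]|->].
      rewrite (canF_eq (invF_f taui)) -/r0; case: (r =P r0) => [->|]; by rewrite ?eqxx.
    case: (r =P r0) => [er|] //=; apply/esym/eqP => ec; apply: nc; by rewrite er.
  by rewrite cardsU1 Hs inE /= sN.
- move=> r.
  have -> : [set c | M r c != None] = sig r |: [set c | L r c != None].
    apply/setP => c; rewrite !inE /M.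
    case E: (L r c) => [s'|]; first by rewrite orbT.
    by case: (c =P sig r).
  by rewrite cardsU1 Hr inE sN.
- move=> c; set r0 := invF sigi c.
  have -> : [set r | M r c != None] = r0 |: [set r | L r c != None].
    apply/setP => r; rewrite !inE /M.
    case E: (L r c) => [s'|]; first by rewrite orbT.
    have -> : (c == sig r) = (r == r0) by rewrite eq_sym (canF_eq (invF_f sigi)).
    by case: (r =P r0).
  by rewrite cardsU1 Hc inE /r0 -{2}(f_invF sigi c) sN.
Qed.
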